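(* Let $(K_n,\Sigma)$ be a signed complete graph, and let $\mathcal{C}$ be a set of signed graphs $(G,\Sigma')$ with $G$ a spanning subgraph of $K_n$ such that: (i) $(K_n,\Sigma')\in\mathcal{C}$ if and only if $\Sigma'=\Sigma$; (ii) for each $(G,\Sigma')\in\mathcal{C}$ with $G\neq K_n$, there is an edge $vw\in E(K_n)\setminus E(G)$ such that $(G+vw,\Sigma')\in\mathcal{C}$ or $(G+vw,\Sigma'\cup\{vw\})\in\mathcal{C}$; (iii) for each $(G,\Sigma')\in\mathcal{C}$ and each $vw\in E(G)$, $(G\setminus vw,\Sigma'\setminus\{vw\})\in\mathcal{C}$ if and only if spectral integral variation occurs under the addition of $vw$ to $(G\setminus vw,\Sigma'\setminus\{vw\})$ with the same parity as in $(K_n,\Sigma)$. Then a signed graph (with underlying graph a spanning subgraph of $K_n$) is integrally $\Sigma$-completable if and only if it belongs to $\mathcal{C}$.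
   Context: All graphs are finite and simple. A signed graph is a pair $(G,\Sigma)$ with $\Sigma\subseteq E(G)$; edges in $\Sigma$ are odd, others even. The signed Laplacian is $L(G,\Sigma)=D(G)-A(G,\Sigma)$, $D(G)$ the diagonal degree matrix, $A(G,\Sigma)$ having $(i,j)$-entry $1$ for an even edge, $-1$ for an odd edge, $0$ otherwise. Adding a new even (resp. odd) edge $vw$ to $(G,\Sigma)$ gives $(G+vw,\Sigma)$ (resp. $(G+vw,\Sigma\cup\{vw\})$); adding it ''with the same parity as in $(K_n,\Sigma)$'' means odd if $vw\in\Sigma$ and even otherwise. Spectral integral variation occurs if, with eigenvalues in nondecreasing order, corresponding eigenvalues of the signed Laplacians before and after differ by integers. $G\setminus vw$ is $G$ with edge $vw$ removed. A signed graph $(G,\Sigma')$ with $V(G)=V(K_n)$ is integrally $\Sigma$-completable if there is a sequence $(G_0,\Sigma_0)=(G,\Sigma'),\dots,(G_m,\Sigma_m)=(K_n,\Sigma)$ such that for each $i\in\{1,\dots,m\}$, $(G_i,\Sigma_i)$ is obtained from $(G_{i-1},\Sigma_{i-1})$ by adding a new (odd or even) edge $v_iw_i\in E(K_n)\setminus E(G_{i-1})$ under which spectral integral variation occurs. *)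

(* Defs.v *)
From mathcomp Require Import all_boot all_order all_algebra.
Set Implicit Arguments. Unset Strict Implicit. Unset Printing Implicit Defensive.
Import Order.TTheory GRing.Theory Num.Theory.
Local Open Scope ring_scope.

Definition Kedges (n : nat) : {set {set 'I_n}} := [set e : {set 'I_n} | #|e| == 2%N].

(* A signed graph on the vertex set of K_n: (edge set E(G), odd edge set Sigma'). *)
Definition sgraph (n : nat) := ({set {set 'I_n}} * {set {set 'I_n}})%type.

Definition wf_sgraph n (g : sgraph n) : Prop :=
  g.1 \subset Kedges n /\ g.2 \subset g.1.

(* Signed Laplacian L = D - A, A_ij = 1 (even edge), -1 (odd edge), 0 (no edge). *)
Definition signed_laplacian (R : comNzRingType) n (g : sgraph n) : 'M[R]_n :=
  \matrix_(i, j)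
    if i == j then (#|[set e in g.1 | i \in e]|)%:R
    else if [set i; j] \in g.1 then (if [set i; j] \in g.2 then 1 else -1)
    else 0.

Definition eigen_seq (R : rcfType) n (A : 'M[R]_n) (s : seq R) : Prop :=
  sorted <=%R s /\ char_poly A = \prod_(x <- s) ('X - x%:P).

Definition SIV (R : rcfType) n (g g' : sgraph n) : Prop :=
  exists s s' : seq R,
    [/\ eigen_seq (signed_laplacian R g) s, eigen_seq (signed_laplacian R g') s'
      & forall i, (i < n)%N -> exists z : int, s'`_i - s`_i = z%:~R].

Definition add_edge n (g : sgraph n) (e : {set 'I_n}) (odd : bool) : sgraph n :=
  (e |: g.1, if odd then e |: g.2 else g.2).

Definition remove_edge n (g : sgraph n) (e : {set 'I_n}) : sgraph n :=
  (g.1 :\ e, g.2 :\ e).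

Inductive int_completable (R : rcfType) n (Sigma : {set {set 'I_n}}) : sgraph n -> Prop :=
  | ic_done : int_completable R Sigma (Kedges n, Sigma)
  | ic_step (g : sgraph n) (e : {set 'I_n}) (odd : bool) :
      e \in Kedges n :\: g.1 ->
      SIV R g (add_edge g e odd) ->
      int_completable R Sigma (add_edge g e odd) ->
      int_completable R Sigma g.

(* Main.v *)
Require Import Defs.
From mathcomp Require Import all_boot all_order all_algebra.

Lemma rem_add_edge n (g : sgraph n) e b :
  g.2 \subset g.1 -> e \notin g.1 -> remove_edge (add_edge g e b) e = g.
Proof.
case: g => E S /= sSE eE; rewrite /remove_edge /add_edge /=.
have eS : e \notin S by apply: contra eE; apply: (subsetP sSE).
congr pair; apply/setP => x; rewrite !inE.
  by case: eqP => [->|]; [rewrite (negbTE eE)|].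
case: b; rewrite ?inE; case: eqP => [->|] //=; by rewrite (negbTE eS).
Qed.

Lemma in_ifU (T : finType) (e : T) (S : {set T}) (b : bool) :
  e \notin S -> (e \in (if b then e |: S else S)) = b.
Proof. by case: b => H; rewrite ?setU11 // (negbTE H). Qed.

Lemma ic_par (R : rcfType) n (Sigma : {set {set 'I_n}}) g :
  int_completable R Sigma g -> forall e, e \in g.1 -> (e \in g.2) = (e \in Sigma).
Proof.
elim => [//|h e0 b0 He0 Hs Hc IH] e He.
have := IH e; rewrite /add_edge /= in_setU1 He orbT => /(_ isT) <-.
have ne : e != e0 by apply: contraTneq He => ->; move: He0; rewrite inE => /andP[].
by clear Hs Hc IH; case: b0; rewrite ?in_setU1 ?(negbTE ne).
Qed.

Theorem lemma3p9 (R : rcfType) (n : nat) (Sigma : {set {set 'I_n}})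
  (C : {set sgraph n}) :
  Sigma \subset Kedges n ->
  (forall g, g \in C -> wf_sgraph g) ->
  (forall S', (Kedges n, S') \in C <-> S' = Sigma) ->
  (forall g, g \in C -> g.1 != Kedges n ->
     exists2 e, e \in Kedges n :\: g.1 &
       (add_edge g e false \in C \/ add_edge g e true \in C)) ->
  (forall g, g \in C -> forall e, e \in g.1 ->
     (remove_edge g e \in C <->
      SIV R (remove_edge g e) (add_edge (remove_edge g e) e (e \in Sigma)))) ->
  forall g, wf_sgraph g -> (int_completable R Sigma g <-> g \in C).
Proof.
move=> sSK wfC Hi Hii Hiii g wfg; split.
  move=> Hc; move: wfg; elim: Hc => [_|h e b He Hsiv Hc IH [hK hS]].
    by apply/Hi.
  move: He; rewrite inE => /andP[eh eK].
  have wfh : wf_sgraph (add_edge h e b).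
    split; rewrite /add_edge /=; first by rewrite subUset sub1set eK.
    clear -hS; case: b; [apply: setUS|apply: subset_trans (subsetUr _ _)] => //.
  have hC := IH wfh.
  have eh' : e \in (add_edge h e b).1 by rewrite /= setU11.
  have eS : e \notin h.2 by apply: contra eh; apply: (subsetP hS).
  have beq : b = (e \in Sigma).
    by rewrite -(@ic_par _ _ _ _ Hc _ eh') /add_edge /= in_ifU.
  have := Hiii _ hC e eh'; rewrite rem_add_edge // => H.
  by apply/H; rewrite -beq.
move=> gC.
have [k] := ubnP #|Kedges n :\: g.1|.
elim: k g gC wfg => // k IH g gC [gK gS] lt.
have [gEq|gne] := eqVneq g.1 (Kedges n).
  case: g gC gK gS lt gEq => E S /= gC _ _ _ gEq; subst E.
  by have -> := (proj1 (Hi S) gC); apply: ic_done.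
have [e He Hadd] := Hii g gC gne.
move: (He); rewrite inE => /andP[eg eK].
have [b hC] : exists b, add_edge g e b \in C by case: Hadd => ?; eexists; eauto.
have hc : int_completable R Sigma (add_edge g e b).
  apply: IH => //; first by apply: wfC.
  rewrite -ltnS; apply: leq_trans lt; rewrite ltnS /add_edge /=.
  apply: proper_card; rewrite properE; apply/andP; split.
    by apply: setDS; apply: subsetUr.
  apply/subsetPn; exists e => //; by rewrite !inE eqxx.
have eh' : e \in (add_edge g e b).1 by rewrite /= setU11.
have eS : e \notin g.2 by apply: contra eg; apply: (subsetP gS).
have beq : b = (e \in Sigma).
  by rewrite -(@ic_par _ _ _ _ hc _ eh') /add_edge /= in_ifU.
apply: (@ic_step R n Sigma g e b He _ hc).
have := Hiii _ hC e eh'; rewrite rem_add_edge // => H.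
by rewrite beq; apply/H.
Qed.
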